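(* The EndPoint mechanism $2$-approximates the optimal Nash welfare.
   Context: Two facilities are located on $[0,1]$; $n\ge1$ agents (any $n$) have locations $x_1\le\dots\le x_n$ in $[0,1]$. For facilities at $y_1,y_2$, agent $i$'s utility is $u_i=1-\min(|x_i-y_1|,|x_i-y_2|)$; the Nash welfare is $\left(\prod_i u_i\right)^{1/n}$. The EndPoint mechanism places one facility at $x_1$ and the other at $x_n$. For a mechanism $M$, the approximation ratio of the Nash welfare is the supremum over all profiles $x$ (all numbers of agents) of $\mathrm{OPT}(x)/\mathrm{NW}(M(x))$, where $\mathrm{OPT}(x)$ is the maximum Nash welfare over all placements of two facilities in $[0,1]$; $M$ ''$\alpha$-approximates'' if this ratio equals $\alpha$. *)

(* Defs.v *)
From HB Require Import structures.
From mathcomp Require Import all_boot all_order all_algebra.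
From mathcomp Require Import all_classical all_reals exp.
Set Implicit Arguments. Unset Strict Implicit. Unset Printing Implicit Defensive.
Import Order.TTheory GRing.Theory Num.Theory.
Local Open Scope ring_scope.
Local Open Scope classical_set_scope.

Section Defs.
Variable R : realType.

Definition util (xi y1 y2 : R) : R := 1 - Num.min `|xi - y1| `|xi - y2|.

Definition nash_welfare (n : nat) (x : 'I_n.+1 -> R) (y1 y2 : R) : R :=
  (\prod_(i < n.+1) util (x i) y1 y2) `^ ((n.+1)%:R^-1).

Definition valid_profile (n : nat) (x : 'I_n.+1 -> R) : Prop :=
  (forall i, 0 <= x i <= 1) /\ (forall i j : 'I_n.+1, (i <= j)%N -> x i <= x j).

Definition OPT (n : nat) (x : 'I_n.+1 -> R) : R :=
  sup [set w | exists y1 y2 : R, 0 <= y1 <= 1 /\ 0 <= y2 <= 1 /\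
                                 w = nash_welfare x y1 y2].

Definition mechanism := forall n : nat, ('I_n.+1 -> R) -> R * R.

Definition EndPoint : mechanism := fun n x => (x ord0, x ord_max).

Definition approx_ratio (M : mechanism) : R :=
  sup [set r | exists (n : nat) (x : 'I_n.+1 -> R), valid_profile x /\
               r = OPT x / nash_welfare x (M n x).1 (M n x).2].

End Defs.

(* Main.v *)
Require Import Defs.
From mathcomp Require Import all_boot all_order all_algebra.
From mathcomp Require Import all_classical all_reals exp.
From mathcomp Require Import lra.
Import Order.TTheory GRing.Theory Num.Theory.
Local Open Scope ring_scope.
Local Open Scope classical_set_scope.

Section Aux.
Context {R : realType}.

Lemma util_01 (a y1 y2 : R) : 0 <= a <= 1 -> 0 <= y1 <= 1 -> 0 <= y2 <= 1 ->
  0 <= util a y1 y2 <= 1.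
Proof.
move=> /andP[a0 a1] /andP[b0 b1] /andP[c0 c1]; rewrite /util.
have h1 : `|a - y1| <= 1 by rewrite ler_norml; apply/andP; split; lra.
apply/andP; split.
  rewrite subr_ge0 ge_min; apply/orP; left; exact: h1.
rewrite lerBlDr lerDl le_min !normr_ge0 //.
Qed.

Lemma util_half (a l r : R) : l <= a -> a <= r -> r - l <= 1 ->
  2^-1 <= util a l r.
Proof.
move=> la ar rl; rewrite /util.
rewrite (ger0_norm (x := a - l)); last by lra.
rewrite (ler0_norm (x := a - r)); last by lra.
have [h|h] := lerP (a - l) (2^-1).
  suff : Num.min (a - l) (- (a - r)) <= 2^-1 by lra.
  by rewrite ge_min h.
suff : Num.min (a - l) (- (a - r)) <= 2^-1 by lra.
rewrite ge_min; apply/orP; right; lra.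
Qed.

Lemma powR_root (p : R) (m : nat) : (0 < m)%N -> 0 <= p ->
  (p `^ (m%:R^-1)) ^+ m = p.
Proof.
move=> m0 p0; rewrite -powR_mulrn ?powR_ge0 // -powRrM mulVf ?powRr1 //.
by rewrite pnatr_eq0 -lt0n.
Qed.

Lemma root_powR (p : R) (m : nat) : (0 < m)%N -> 0 <= p ->
  (p ^+ m) `^ (m%:R^-1) = p.
Proof.
move=> m0 p0; rewrite -powR_mulrn // -powRrM mulfV ?powRr1 //.
by rewrite pnatr_eq0 -lt0n.
Qed.

Lemma nw_le1 n (x : 'I_n.+1 -> R) y1 y2 : (forall i, 0 <= x i <= 1) ->
  0 <= y1 <= 1 -> 0 <= y2 <= 1 -> nash_welfare x y1 y2 <= 1.
Proof.
move=> hx h1 h2; rewrite /nash_welfare.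
have hp : \prod_(i < n.+1) util (x i) y1 y2 <= 1.
  by apply: prodr_ile1 => i _; apply: util_01.
have r0 : 0 <= (n.+1)%:R^-1 :> R by rewrite invr_ge0 ler0n.
have p0 : 0 <= \prod_(i < n.+1) util (x i) y1 y2.
  by apply: prodr_ge0 => i _; case/andP: (@util_01 _ _ _ (hx i) h1 h2).
suff : (\prod_(i < n.+1) util (x i) y1 y2) `^ ((n.+1)%:R^-1) <= 1 `^ ((n.+1)%:R^-1) by rewrite powR1.
apply: (ge0_ler_powR r0) => //; rewrite nnegrE //.
Qed.

Lemma nw_EP n (x : 'I_n.+1 -> R) : valid_profile x ->
  2^-1 <= nash_welfare x (x ord0) (x ord_max).
Proof.
move=> [hx hle]; rewrite /nash_welfare.
have hp : (2^-1) ^+ n.+1 <= \prod_(i < n.+1) util (x i) (x ord0) (x ord_max).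
  have -> : (2^-1:R) ^+ n.+1 = \prod_(i < n.+1) (2^-1:R) by rewrite prodr_const card_ord.
  apply: ler_prod => i _; apply/andP; split; first by rewrite invr_ge0.
  apply: util_half; first by apply: hle.
    by apply: hle; rewrite -ltnS ltn_ord.
  by move: (hx ord0) (hx ord_max) => /andP[? ?] /andP[? ?]; lra.
rewrite -[X in X <= _](@root_powR (2^-1) n.+1) //; last by rewrite invr_ge0.
have r0 : 0 <= (n.+1)%:R^-1 :> R by rewrite invr_ge0 ler0n.
have a0 : 0 <= (2^-1 : R) ^+ n.+1 by rewrite exprn_ge0 // invr_ge0.
apply: (ge0_ler_powR r0) => //; rewrite nnegrE //; exact: le_trans a0 hp.
Qed.

Lemma OPT_has_sup n (x : 'I_n.+1 -> R) : (forall i, 0 <= x i <= 1) ->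
  has_sup [set w | exists y1 y2 : R, 0 <= y1 <= 1 /\ 0 <= y2 <= 1 /\
                                 w = nash_welfare x y1 y2].
Proof.
move=> hx; split.
  exists (nash_welfare x 0 0), 0, 0; split; first by rewrite lexx ler01.
  by split => //; rewrite lexx ler01.
exists 1 => w [y1 [y2 [h1 [h2 ->]]]]; exact: nw_le1.
Qed.

Lemma OPT_le1 n (x : 'I_n.+1 -> R) : (forall i, 0 <= x i <= 1) -> OPT x <= 1.
Proof.
move=> hx; rewrite /OPT; apply: ge_sup; first by case: (@OPT_has_sup _ _ hx).
move=> w [y1 [y2 [h1 [h2 ->]]]]; exact: nw_le1.
Qed.

Lemma OPT_ge n (x : 'I_n.+1 -> R) y1 y2 : (forall i, 0 <= x i <= 1) ->
  0 <= y1 <= 1 -> 0 <= y2 <= 1 -> nash_welfare x y1 y2 <= OPT x.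
Proof.
move=> hx h1 h2; apply: (sup_upper_bound (@OPT_has_sup _ _ hx)).
by exists y1, y2.
Qed.

Lemma bernoulli (d : R) (k : nat) : 0 <= d -> 1 + k%:R * d <= (1 + d) ^+ k.
Proof.
move=> d0; elim: k => [|k IH]; first by rewrite mul0r addr0 expr0.
rewrite exprS -nat1r.
have h : 0 <= (1 + d) ^+ k by rewrite exprn_ge0 //; lra.
have h2 : 0 <= k%:R * d :> R by rewrite mulr_ge0 // ler0n.
nra.
Qed.


Lemma normE (a d : R) : 0 <= d -> (a = d \/ a = - d) -> `|a| = d.
Proof. by move=> d0 [->|->]; rewrite ?normrN ger0_norm. Qed.

Lemma utilE (a y1 y2 d1 d2 : R) : `|a - y1| = d1 -> `|a - y2| = d2 ->
  util a y1 y2 = 1 - Num.min d1 d2.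
Proof. by rewrite /util => -> ->. Qed.

Definition pf (k : nat) : 'I_k.+3 -> R := fun i =>
  if (nat_of_ord i == 0)%N then 0 else if (nat_of_ord i == k.+2)%N then 1 else 2^-1.
Arguments pf {k}.

Lemma pf_valid k : valid_profile (pf (k:=k)).
Proof.
split.
  move=> i; rewrite /pf; case: eqP => _; first by rewrite lexx ler01.
  case: eqP => _; first by rewrite lexx ler01.
  apply/andP; split; lra.
move=> i j hij; have hi := ltn_ord i; have hj := ltn_ord j; rewrite /pf.
case: (eqVneq (nat_of_ord i) 0) => hi0; first by case: eqP => _; [lra|case: eqP => _; lra].
case: (eqVneq (nat_of_ord j) 0) => hj0.
  by exfalso; move: hij hi0; rewrite hj0 leqn0 => ->.
case: (eqVneq (nat_of_ord i) k.+2) => hik.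
  case: (eqVneq (nat_of_ord j) k.+2) => hjk; first lra.
  by exfalso; move: hij hj hjk; rewrite hik ltnS => h1 h2; rewrite eqn_leq h1 h2.
by case: eqP => _; lra.
Qed.

Lemma pf_mid k (j : 'I_k.+3) : (0 < j < k.+2)%N -> pf j = 2^-1.
Proof.
move=> /andP[h1 h2]; rewrite /pf; rewrite (gtn_eqF h1) (ltn_eqF h2) //.
Qed.

Lemma pf_last k (j : 'I_k.+3) : nat_of_ord j = k.+2 -> pf j = 1.
Proof. by move=> h; rewrite /pf h /= ?eqxx. Qed.

Lemma pf_first k (j : 'I_k.+3) : nat_of_ord j = 0%N -> pf j = 0.
Proof. by move=> h; rewrite /pf h /= ?eqxx. Qed.

Lemma prod3 k (F : 'I_k.+3 -> R) c :
  (forall j : 'I_k.+3, (0 < j < k.+2)%N -> F j = c) ->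
  \prod_(i < k.+3) F i = F ord0 * c ^+ k.+1 * F ord_max.
Proof.
move=> hF; rewrite big_ord_recl big_ord_recr /= -mulrA; congr (_ * (_ * _)).
  rewrite -[in RHS](card_ord k.+1) -prodr_const; apply: eq_bigr => i _.
  by apply: hF => /=; rewrite /bump /= add1n ltnS ltn_ord.
by congr (F _); apply: val_inj.
Qed.

Lemma prodE k : \prod_(i < k.+3) util (pf i) (pf (k:=k) ord0) (pf (k:=k) ord_max)
  = (2^-1) ^+ k.+1.
Proof.
have h0 : pf (k:=k) ord0 = 0 by rewrite pf_first.
have h1 : pf (k:=k) ord_max = 1 by rewrite pf_last.
rewrite (@prod3 k _ (2^-1)).
  rewrite h0 h1 (@utilE 0 0 1 0 1); last 2 first.
  - by apply: normE => //; left; lra.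
  - by apply: normE => //; right; lra.
  rewrite (@utilE 1 0 1 1 0); last 2 first.
  - by apply: normE => //; left; lra.
  - by apply: normE => //; left; lra.
  rewrite min_l ?ler01 // min_r ?ler01 //; lra.
move=> j hj; rewrite pf_mid // h0 h1 (@utilE _ 0 1 (2^-1) (2^-1)).
- rewrite min_l //; lra.
- by apply: normE; [lra | left; lra].
- by apply: normE; [lra | right; lra].
Qed.

Lemma prodO k : \prod_(i < k.+3) util (pf (k:=k) i) (2^-1) 1 = 2^-1.
Proof.
rewrite (@prod3 k _ 1).
  rewrite expr1n mulr1 pf_first // pf_last // (@utilE 0 _ 1 (2^-1) 1); last 2 first.
  - by apply: normE; [lra | right; lra].
  - by apply: normE; [lra | right; lra].
  rewrite (@utilE 1 _ 1 (2^-1) 0); last 2 first.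
  - by apply: normE; [lra | left; lra].
  - by apply: normE; [lra | left; lra].
  rewrite min_l; last lra.
  rewrite min_r; last lra.
  lra.
move=> j hj; rewrite pf_mid // (@utilE _ _ 1 0 (2^-1)).
- rewrite min_l //; lra.
- by apply: normE; [lra | left; lra].
- by apply: normE; [lra | right; lra].
Qed.

Lemma final_contra (P E T U K d : R) : 0 < d -> 0 < T ->
  2^-1 <= P * T -> 1 + (K + 3) * d <= E -> P * E = U -> U * T = 4 -> 7 < K * d -> False.
Proof.
move=> d0 T0 h1 h2 h3 h4 h5.
have hE : 8 < E by lra.
have h6 : P * E * T = 4 by rewrite h3 h4.
have h7 : 2^-1 * E <= P * T * E by rewrite ler_pM2r //; lra.
lra.
Qed.

End Aux.
Arguments nw_EP {R n x}.
Arguments OPT_le1 {R n x}.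
Arguments OPT_ge {R n x y1 y2}.
Arguments pf {R k}.


Theorem theorem14 (R : realType) : approx_ratio (@EndPoint R) = 2.
Proof.
rewrite /approx_ratio.
set S := [set r | _].
have hub : ubound S 2.
  move=> r [n [x [hv ->]]] /=.
  have hN := nw_EP hv.
  have hN0 : 0 < nash_welfare x (x ord0) (x ord_max) by apply: lt_le_trans hN; lra.
  rewrite ler_pdivrMr //.
  have := OPT_le1 hv.1; lra.
have mem : forall k, S (OPT (pf (k:=k)) / nash_welfare (pf (k:=k)) (pf (k:=k) ord0) (pf (k:=k) ord_max)).
  by move=> k; exists k.+2, (pf (k:=k)); split => //; exact: pf_valid.
have hne : S !=set0 by exists (OPT (pf (k:=0)) / nash_welfare (pf (k:=0)) (pf (k:=0) ord0) (pf (k:=0) ord_max)).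
have hsup : has_sup S by split => //; exists 2.
apply/eqP; rewrite eq_le ge_sup //=.
rewrite leNgt; apply/negP => hs.
set s := sup S in hs.
have key : forall k, 0 <= s /\ 2^-1 <= s ^+ k.+3 * (2^-1) ^+ k.+1.
  move=> k.
  have hv := @pf_valid R k.
  set A := nash_welfare (pf (R:=R) (k:=k)) (2^-1 : R) 1.
  set B := nash_welfare (pf (R:=R) (k:=k)) (pf (k:=k) ord0) (pf (k:=k) ord_max).
  have hB : 2^-1 <= B := nw_EP hv.
  have hB0 : 0 < B by apply: lt_le_trans hB; lra.
  have hA0 : 0 <= A by apply: powR_ge0.
  have hAO : A <= OPT (pf (k:=k)) by apply: OPT_ge hv.1 _ _; apply/andP; split; lra.
  have hrs := sup_upper_bound hsup (mem k).
  have hAs : A <= s * B.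
    rewrite -ler_pdivrMr //; apply: le_trans hrs.
    by rewrite ler_pM2r // invr_gt0.
  have hs0 : 0 <= s by rewrite -(pmulr_lge0 _ hB0); exact: le_trans hA0 hAs.
  have hp : A ^+ k.+3 <= (s * B) ^+ k.+3.
    by rewrite ler_pXn2r // nnegrE // mulr_ge0 // ltW.
  have hP1 : 0 <= \prod_(i < k.+3) util (pf (R:=R) (k:=k) i) (pf (k:=k) ord0) (pf (k:=k) ord_max).
    by rewrite prodr_ge0 // => i _; case/andP: (@util_01 _ _ _ _ (hv.1 i) (hv.1 ord0) (hv.1 ord_max)).
  have hP2 : 0 <= \prod_(i < k.+3) util (pf (R:=R) (k:=k) i) (2^-1) 1.
    rewrite prodr_ge0 // => i _.
    by case/andP: (@util_01 _ _ (2^-1) 1 (hv.1 i) ltac:(apply/andP; split; lra) ltac:(apply/andP; split; lra)).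
  split; first exact: hs0.
  move: hp; rewrite exprMn /A /B /nash_welfare !powR_root // prodE prodO //.
have hs0 := (key 0%N).1.
have s0 : 0 < s.
  rewrite lt_neqAle hs0 andbT; apply/eqP => e0.
  have := (key 0%N).2; rewrite -e0 expr0n /= mul0r; lra.
set d := 2 / s - 1.
have d0 : 0 < d by rewrite /d subr_gt0 ltr_pdivlMr // mul1r.
have e : s * (1 + d) = 2 by rewrite /d addrC subrK mulrC divfK // gt_eqF.
have hd7 : 0 <= 7 / d by rewrite divr_ge0 // ltW.
set k := Num.Def.archi_bound (7 / d).
have hk : 7 / d < k%:R by apply: archi_boundP.
have hkd : 7 < k%:R * d by rewrite -ltr_pdivrMr.
have [_ hkey] := key k.
have hb := @bernoulli R d k.+3 (ltW d0).
have hPE : s ^+ k.+3 * (1 + d) ^+ k.+3 = 2 ^+ k.+3 by rewrite -exprMn e.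
have hUT : 2 ^+ k.+3 * (2^-1) ^+ k.+1 = 4 :> R.
  have -> : k.+3 = (k.+1 + 2)%N by rewrite addn2.
  rewrite exprD mulrAC -exprMn mulfV ?pnatr_eq0 // expr1n mul1r.
  by rewrite expr2 -natrM.
have h3 : (k.+3)%:R = k%:R + 3 :> R by rewrite -addn3 natrD.
rewrite h3 in hb.
have hT0 : 0 < (2^-1 : R) ^+ k.+1 by rewrite exprn_gt0 // invr_gt0.
exact: (@final_contra _ _ _ _ _ _ _ d0 hT0 hkey hb hPE hUT hkd).
Qed.
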